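(* Let $d=\infty$ and $C>0$. Then $$\mathcal P_d\subsetneq\mathcal A_d=T^\uparrow_{d,C}(\mathcal S_{d,C})\subsetneq\mathcal N_d\subsetneq\mathcal M_d,$$ and $T^\uparrow_{d,C}$ is a bijection from $\mathcal S_{d,C}$ onto $\mathcal A_d$ with inverse $T^\downarrow_{d,C}|_{\mathcal A_d}$. Moreover $T^\downarrow_{d,C}(\mathcal M_d)=\mathcal S_{d,C}$, and for every ${\boldsymbol\gamma}\in\mathcal M_d$ one has $(T^\uparrow_{d,C}\circ T^\downarrow_{d,C}){\boldsymbol\gamma}\le{\boldsymbol\gamma}$, with equality if and only if ${\boldsymbol\gamma}\in\mathcal A_d$.
   Context: Let $d\in\mathbb N\cup\{\infty\}$. Write $[d]=\{1,\dots,d\}$ if $d\in\mathbb N$ and $[d]=\mathbb N$ if $d=\infty$; for $s\in\mathbb N$, $[s]=\{1,\dots,s\}$. Let $\mathcal U_d$ be the set of all finite subsets of $[d]$. For families ${\boldsymbol\gamma}=(\gamma_u)_{u\in\mathcal U_d}$ of real numbers, inequalities and limits are meant componentwise, and $\mathbf 0$ denotes the zero family. The set of weights is $\mathcal W_d=\{{\boldsymbol\gamma}\in\mathbb R^{\mathcal U_d}:{\boldsymbol\gamma}\ge\mathbf 0\}$. For $v\in\mathcal U_d$ the difference operator $\Delta_v$ on $\mathbb R^{\mathcal U_d}$ is $(\Delta_v{\boldsymbol\gamma})_u=\sum_{w\subseteq v}(-1)^{|w|}\gamma_{u\cup w}$. Weights are completely monotone if $\Delta_v{\boldsymbol\gamma}\ge\mathbf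 0$ for every $v\in\mathcal U_d$; $\mathcal M_d$ denotes the set of completely monotone weights. For $C>0$ let $\mathcal S_{d,C}=\{{\boldsymbol\gamma}\in\mathcal W_d:\sum_{v\in\mathcal U_d}C^{2|v|}\gamma_v<\infty\}$, and let $T^\uparrow_{d,C}\colon\mathcal S_{d,C}\to\mathcal W_d$, $(T^\uparrow_{d,C}{\boldsymbol\gamma})_u=\sum_{v\in\mathcal U_d,\,u\subseteq v}C^{2|v|}\gamma_v$. Define $T^\downarrow_{d,C}\colon\mathcal M_d\to\mathcal W_d$ by $(T^\downarrow_{d,C}{\boldsymbol\gamma})_u=C^{-2|u|}\lim_{s\to\infty}(\Delta_{[s]\setminus u}{\boldsymbol\gamma})_u$ for $d=\infty$ (the sequence is non-increasing in $[0,\gamma_u]$ for ${\boldsymbol\gamma}\in\mathcal M_d$). For $d=\infty$, with the convention $\max\emptyset=0$: $\mathcal N_d=\{{\boldsymbol\gamma}\in\mathcal M_d:\ \gamma_u\to0 \text{ as } \max u\to\infty\}$ (i.e. for every $\varepsilon>0$ there is $N$ with $\gamma_u<\varepsilon$ whenever $\max u\ge N$); $\mathcal P_d=\{{\boldsymbol\gamma}\in\mathcal M_d:\sum_{v\in\mathcal U_d}\gamma_v<\infty\}$; and $\mathcal A_d=\{{\boldsymbol\gamma}\in\mathcal M_d:\lim_{r\to\infty}\lim_{s\to\infty}\Delta_{[s]\setminus[r]}{\boldsymbol\gamma}={\boldsymbol\gamma}\}$ (componentwise iterated limits). *)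

(* Defs.v *)
From HB Require Import structures.
From mathcomp Require Import all_boot all_order all_algebra.
From mathcomp Require Import finmap.
From mathcomp Require Import all_classical all_reals all_analysis.
Set Implicit Arguments. Unset Strict Implicit. Unset Printing Implicit Defensive.
Import Order.TTheory GRing.Theory Num.Theory.
Local Open Scope ring_scope.
Local Open Scope classical_set_scope.

(* Index set [d] = N = {1,2,...} for d = infinity is encoded by nat via
   i <-> i.+1, so U_d (finite subsets of [d]) is {fset nat}, and
   [s] = {1,...,s} is encoded by {0,...,s-1}. *)
Definition Ud := {fset nat}.

Definition family (R : realType) := Ud -> R.

Definition sq (s : nat) : Ud := [fset (val i) | i : 'I_s]%fset.

(* max u in the original 1-based labelling, with max emptyset = 0 *)
Definition maxU (u : Ud) : nat := \max_(i <- u) i.+1.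

Definition card (u : Ud) : nat := #|` u|%fset.

Definition Delta (R : realType) (v : Ud) (g : family R) (u : Ud) : R :=
  \sum_(w <- fpowerset v) (-1) ^+ card w * g (fsetU u w).

Definition Wd (R : realType) : set (family R) := [set g | forall u, 0 <= g u].

Definition Md (R : realType) : set (family R) :=
  [set g | Wd g /\ forall v u, 0 <= Delta v g u].

Definition Sd (R : realType) (C : R) : set (family R) :=
  [set g | Wd g /\
     (\esum_(v in [set: Ud]) ((C ^+ (2 * card v) * g v)%:E) < +oo)%E].

Definition Tup (R : realType) (C : R) (g : family R) : family R :=
  fun u => fine (\esum_(v in [set v : Ud | fsubset u v])
                    ((C ^+ (2 * card v) * g v)%:E)).

Definition Tdown (R : realType) (C : R) (g : family R) : family R :=
  fun u => C ^- (2 * card u) * limn ((fun s : nat => Delta (fsetD (sq s) u) g u) : nat -> R^o).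

Definition Nd (R : realType) : set (family R) :=
  [set g | Md g /\ forall eps : R, 0 < eps ->
     exists N : nat, forall u, (N <= maxU u)%N -> g u < eps].

Definition Pd (R : realType) : set (family R) :=
  [set g | Md g /\ (\esum_(v in [set: Ud]) ((g v)%:E) < +oo)%E].

Definition Ad (R : realType) : set (family R) :=
  [set g | Md g /\ forall u,
     ((fun r : nat => limn ((fun s : nat => Delta (fsetD (sq s) (sq r)) g u) : nat -> R^o)) : nat -> R^o) @ \oo --> (g u : R^o)].

(* Main.v *)
Require Import Defs.
From HB Require Import structures.
From mathcomp Require Import all_boot all_order all_algebra.
From mathcomp Require Import finmap.
From mathcomp Require Import all_classical all_reals all_analysis.
From mathcomp Require Import lra ring.
Import Order.TTheory GRing.Theory Num.Theory.
Import numFieldNormedType.Exports.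
Local Open Scope ring_scope.
Local Open Scope classical_set_scope.
Set Implicit Arguments. Unset Strict Implicit. Unset Printing Implicit Defensive.

Local Open Scope ring_scope.
Local Open Scope classical_set_scope.
Local Open Scope fset_scope.
Section Comb.
Variable R : realType.
Implicit Types (g : Defs.family R) (u v w A B : Ud).

Lemma card0 : Defs.card fset0 = 0%N.
Proof. by rewrite /Defs.card cardfs0. Qed.

Lemma cardU1 x w : x \notin w -> Defs.card (x |` w) = (Defs.card w).+1.
Proof. by move=> h; rewrite /Defs.card cardfsU1 h. Qed.

Lemma powerset_split (F : Ud -> R) x A : x \notin A ->
  \sum_(w <- fpowerset (x |` A)) F w =
  (\sum_(w <- fpowerset A) F w + \sum_(w <- fpowerset A) F (x |` w))%R.
Proof.
move=> xA.
rewrite (big_fsetID _ (fun w => x \notin w)) /=; congr (_ + _)%R.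
  apply: eq_fbigl => w; rewrite !inE !fpowersetE /=.
  apply/andP/idP => [[/fsubsetP s xw]|/fsubsetP s].
    apply/fsubsetP => i iw; have := s i iw; rewrite !inE; case/orP => // /eqP ei.
    by rewrite -ei iw in xw.
  split; last by apply/negP => /s; rewrite (negbTE xA).
  by apply/fsubsetP => i /s ?; rewrite !inE; apply/orP; right.
have -> : [fset w in fpowerset (x |` A) | ~~ (x \notin w)]%fset =
          [fset x |` w | w in fpowerset A]%fset.
  apply/fsetP => w; rewrite !inE /= negbK; apply/idP/imfsetP => /=.
    move=> /andP[ws xw]; exists (w `\ x); first by rewrite fpowersetE fsubDset -fpowersetE.
    by rewrite fsetD1K.
  case=> w0; rewrite fpowersetE => w0A ->; apply/andP; split; last by rewrite !inE eqxx.
  by rewrite fpowersetE fsetUS.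
rewrite big_imfset //= => w1 w2; rewrite !fpowersetE => /fsubsetP h1 /fsubsetP h2 e.
apply/fsetP => i; have := congr1 (fun s => i \in s) e; rewrite /= !inE.
case: (eqVneq i x) => [->|_] //=.
by rewrite (contraNF (h1 x) xA) (contraNF (h2 x) xA).
Qed.

Lemma Delta0 g u : Delta fset0 g u = g u.
Proof. by rewrite /Delta fpowerset0 big_seq_fset1 card0 expr0 mul1r fsetU0. Qed.

Lemma Delta_rec g x A u : x \notin A ->
  Delta (x |` A) g u = (Delta A g u - Delta A g (x |` u))%R.
Proof.
move=> xA; rewrite /Delta powerset_split //; congr (_ + _)%R.
rewrite -sumrN big_seq [RHS]big_seq; apply: eq_bigr => w; rewrite fpowersetE => wA.
have xw : x \notin w by apply: contra xA; apply: (fsubsetP wA).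
rewrite cardU1 // exprS mulN1r mulNr; congr (- (_ * g _)).
by rewrite fsetUCA fsetUA.
Qed.

Lemma Delta_meet g x A u : x \in A -> x \in u -> Delta A g u = 0.
Proof.
move=> xA xu; rewrite -(fsetD1K xA) Delta_rec ?fsetD11 //.
by rewrite (fsetUidPr _ _ (_ : [fset x] `<=` u)) ?subrr // fsub1set.
Qed.

Lemma mobius g A B u : [disjoint A & B] ->
  \sum_(w <- fpowerset A) Delta ((A `\` w) `|` B) g (u `|` w) = Delta B g u.
Proof.
elim/fset1U_rect: A => [|x A xA IH].
  by move=> _; rewrite fpowerset0 big_seq_fset1 fsetD0 fset0U fsetU0.
rewrite fdisjointU1X => /andP[xB dAB].
rewrite powerset_split // -(IH dAB).
rewrite -big_split /= [RHS]big_seq big_seq; apply: eq_bigr => w; rewrite fpowersetE => wA.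
have xw : x \notin w by apply: contra xA; apply: (fsubsetP wA).
have -> : ((x |` A) `\` w) `|` B = x |` ((A `\` w) `|` B).
  by apply/fsetP => i; rewrite !inE; case: (eqVneq i x) => [->|] //=; rewrite (negbTE xw).
rewrite Delta_rec; last first.
  by rewrite !inE; apply/negP => /orP[/andP[_ h]|h]; [rewrite h in xA|rewrite h in xB].
have -> : ((x |` A) `\` (x |` w)) `|` B = (A `\` w) `|` B.
  apply/fsetP => i; rewrite !inE; case: (eqVneq i x) => [->|] //=.
  by rewrite (negbTE xA) andbF.
have -> : u `|` (x |` w) = x |` (u `|` w) by rewrite fsetUCA.
by rewrite subrK.
Qed.
End Comb.

Local Open Scope ring_scope.
Local Open Scope classical_set_scope.
Section Anal.
Variable R : realType.

Lemma cvg_epsN (f : nat -> R^o) (l : R^o) :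
  (forall e : R, 0 < e -> exists N, forall n, (N <= n)%N -> `|l - f n| <= e) ->
  f @ \oo --> l.
Proof.
move=> H; apply/cvgrPdist_le => e e0; have [N HN] := H e e0.
near=> n; apply: HN; near: n; exact: nbhs_infty_ge.
Unshelve. all: by end_near. Qed.

Lemma cvg_eqN (f g : nat -> R^o) (l : R^o) N :
  (forall n, (N <= n)%N -> f n = g n) -> f @ \oo --> l -> g @ \oo --> l.
Proof.
move=> e; apply: cvg_trans; apply: near_eq_cvg; near=> n.
by rewrite e //; near: n; exact: nbhs_infty_ge.
Unshelve. all: by end_near. Qed.

Lemma limnE (f : nat -> R^o) (l : R^o) : f @ \oo --> l -> limn f = l.
Proof. exact: cvg_lim. Qed.

Lemma cvg_uniq (f : nat -> R^o) (l l' : R^o) : f @ \oo --> l -> f @ \oo --> l' -> l = l'.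
Proof. by move=> h1 h2; rewrite -(limnE h1) (limnE h2). Qed.

Lemma cvg_bigsum (I : Type) (s : seq I) (f : I -> nat -> R^o) (l : I -> R^o) :
  (forall i, f i @ \oo --> l i) ->
  (fun n => \sum_(i <- s) f i n) @ \oo --> \sum_(i <- s) l i.
Proof.
move=> H; elim: s => [|i s IH].
  rewrite big_nil; under eq_fun do rewrite big_nil; exact: cvg_cst.
rewrite big_cons; under eq_fun do rewrite big_cons.
exact: cvgD.
Qed.

Definition tail (s : nat) : set Ud := [set v | (s < maxU v)%N].

Section ES.
Variable k : Ud -> R.
Hypothesis k0 : forall v, 0 <= k v.
Hypothesis kfin : (\esum_(v in [set: Ud]) (k v)%:E < +oo)%E.

Definition ES (P : set Ud) : R := fine (\esum_(v in P) (k v)%:E).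

Lemma esum_ge0' P : (0 <= \esum_(v in P) (k v)%:E)%E.
Proof. by apply: esum_ge0 => v _; rewrite lee_fin. Qed.

Lemma esum_sub P Q : P `<=` Q ->
  (\esum_(v in P) (k v)%:E <= \esum_(v in Q) (k v)%:E)%E.
Proof.
move=> PQ; rewrite (esumID P Q); last by move=> v _; rewrite lee_fin.
rewrite setIidr // leeDl //; exact: esum_ge0'.
Qed.

Lemma esum_fin P : \esum_(v in P) (k v)%:E \is a fin_num.
Proof.
rewrite ge0_fin_numE; last exact: esum_ge0'.
by apply: le_lt_trans kfin; apply: esum_sub.
Qed.

Lemma ES_E P : (ES P)%:E = \esum_(v in P) (k v)%:E.
Proof. by rewrite fineK // esum_fin. Qed.

Lemma ES_ge0 P : 0 <= ES P.
Proof. by rewrite -lee_fin ES_E esum_ge0'. Qed.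

Lemma ES_split B A : ES A = ES (A `&` B) + ES (A `&` ~` B).
Proof.
apply: EFin_inj; rewrite EFinD !ES_E; apply: esumID => v _; by rewrite lee_fin.
Qed.

Lemma ES_sub P Q : P `<=` Q -> ES P <= ES Q.
Proof. by move=> PQ; rewrite -lee_fin !ES_E esum_sub. Qed.

Lemma ES_fin P (F : {fset Ud}) : (forall v, v \in F -> P v) ->
  \sum_(v <- F) k v <= ES P.
Proof.
move=> FP; rewrite -lee_fin ES_E -sumEFin; apply: esum_ge.
exists [set` F]; first by split; [exact: finite_fset| move=> v /= /FP].
by rewrite fsbig_finite ?set_fsetK //; exact: finite_fset.
Qed.

Lemma ES_le P (M : R) :
  (forall F : {fset Ud}, (forall v, v \in F -> P v) -> \sum_(v <- F) k v <= M) ->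
  ES P <= M.
Proof.
move=> H; rewrite -lee_fin ES_E; apply: ge_ereal_sup => _ [X [finX XP] <-].
rewrite fsbig_finite // sumEFin lee_fin; apply: H => v.
by rewrite in_fset_set // in_setE => /XP.
Qed.

Lemma ES_set1 v : ES [set v] = k v.
Proof. by rewrite /ES esum_set1 // lee_fin. Qed.

Lemma tail_small e : 0 < e -> exists N, forall s, (N <= s)%N -> ES (tail s) <= e.
Proof.
move=> e0; set T := ES [set: Ud].
have : ((T - e)%:E < \esum_(v in [set: Ud]) (k v)%:E)%E.
  by rewrite -ES_E -/T lte_fin; lra.
move=> /ereal_sup_gt [_ [X [finX _] <-]].
rewrite fsbig_finite // sumEFin lte_fin => HX.
exists (\max_(v <- fset_set X) maxU v) => s Ns.
have : \sum_(v <- fset_set X) k v <= ES (setT `&` ~` tail s).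
  apply: ES_fin => v vX; split => //; rewrite /tail /=; apply/negP; rewrite -leqNgt.
  by apply: leq_trans Ns; apply: (leq_bigmax_seq v).
have := ES_split (tail s) setT; rewrite -/T setTI; lra.
Qed.

Lemma ES_approx P Q B : P `&` ~` Q `<=` B -> Q `&` ~` P `<=` B ->
  `|ES P - ES Q| <= ES B.
Proof.
move=> h1 h2; rewrite (ES_split Q P) (ES_split P Q) setIC.
have := ES_sub h1; have := ES_sub h2.
have := ES_ge0 (P `&` ~` Q); have := ES_ge0 (Q `&` ~` P).
rewrite ler_norml; move=> *; apply/andP; split; lra.
Qed.

Lemma ES_cvg (P : nat -> set Ud) (Q : set Ud) :
  (forall s, P s `&` ~` Q `<=` tail s /\ Q `&` ~` P s `<=` tail s) ->
  ((fun s => ES (P s)) : nat -> R^o) @ \oo --> (ES Q : R^o).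
Proof.
move=> H; apply: cvg_epsN => e e0; have [N HN] := tail_small e0.
exists N => n Nn; have [h1 h2] := H n.
by rewrite distrC; apply: le_trans (HN _ Nn); apply: ES_approx.
Qed.
End ES.
End Anal.

Local Open Scope ring_scope.
Local Open Scope classical_set_scope.
Local Open Scope fset_scope.

Lemma mem_sq s i : (i \in sq s) = (i < s)%N.
Proof.
rewrite /sq; apply/imfsetP/idP => [[j _ ->]|h] /=; first exact: ltn_ord.
by exists (Ordinal h).
Qed.

Lemma maxU_le v s : (maxU v <= s)%N = (v `<=` sq s).
Proof.
apply/bigmax_leqP_seq/fsubsetP => [h i iv|h i iv _]; first by rewrite mem_sq; exact: h.
by rewrite -mem_sq; exact: h.
Qed.

Lemma maxU_gt i v : i \in v -> (i < maxU v)%N.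
Proof. by move=> iv; rewrite /maxU; apply: (leq_bigmax_seq i). Qed.

Lemma maxU_sub u v : u `<=` v -> (maxU u <= maxU v)%N.
Proof.
move=> /fsubsetP uv; apply/bigmax_leqP_seq => i iu _; exact/maxU_gt/uv.
Qed.

Lemma sqS s : sq s.+1 = s |` sq s.
Proof. by apply/fsetP => i; rewrite !inE !mem_sq ltnS leq_eqVlt. Qed.

Lemma sq_mono r s : (r <= s)%N -> sq r `<=` sq s.
Proof. by move=> rs; apply/fsubsetP => i; rewrite !mem_sq => /leq_trans; apply. Qed.

Lemma sum_fsub_le (R : realType) (T : choiceType) (A B : {fset T}) (f : T -> R) :
  A `<=` B -> (forall x, x \in B -> 0 <= f x) ->
  \sum_(x <- A) f x <= \sum_(x <- B) f x.
Proof.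
move=> AB f0; rewrite (big_fsetID _ (mem A) B) /=.
have -> : \sum_(x <- [fset x in B | x \in A]) f x = \sum_(x <- A) f x.
  apply: eq_fbigl => x; rewrite !inE /=; case xA: (x \in A); rewrite ?andbT ?andbF //.
  by apply: (fsubsetP AB).
rewrite lerDl big_seq sumr_ge0 // => x; rewrite !inE /= => /andP[xB _]; exact: f0.
Qed.

Lemma fsetUDK' (u v : Ud) : u `<=` v -> u `|` (v `\` u) = v.
Proof.
move=> /fsubsetP uv; apply/fsetP => i; rewrite !inE.
by case iu: (i \in u) => //=; rewrite uv.
Qed.

Lemma sum_reindex_le (R : realType) u S (G : Ud -> R) (F : {fset Ud}) :
  (forall w, 0 <= G w) -> (forall v, v \in F -> u `<=` v /\ v `<=` S) ->
  \sum_(v <- F) G (v `\` u) <= \sum_(w <- fpowerset (S `\` u)) G w.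
Proof.
move=> G0 HF.
have -> : \sum_(v <- F) G (v `\` u) = \sum_(w <- [fset v `\` u | v in F]) G w.
  rewrite big_imfset //= => v1 v2 /HF[h1 _] /HF[h2 _] e.
  by rewrite -(fsetUDK' h1) -(fsetUDK' h2) e.
apply: sum_fsub_le => [|w _]; last exact: G0.
apply/fsubsetP => w /imfsetP [v /HF [_ vS] ->].
by rewrite fpowersetE; apply: fsetSD.
Qed.

Section MdTheory.
Variable R : realType.
Variable g : Defs.family R.
Hypothesis hg : Md g.

Lemma Md_ge0 A u : 0 <= Delta A g u.
Proof. by case: hg => _; apply. Qed.

Lemma Md_g0 u : 0 <= g u.
Proof. by case: hg => /(_ u). Qed.

Lemma Delta_mono1 x A u : x \notin A -> Delta (x |` A) g u <= Delta A g u.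
Proof. by move=> xA; rewrite Delta_rec // gerBl Md_ge0. Qed.

Lemma Delta_le A u : Delta A g u <= g u.
Proof.
elim/fset1U_rect: A u => [|x A xA IH] u; first by rewrite Delta0.
exact: le_trans (Delta_mono1 _ xA) (IH u).
Qed.

Lemma Delta_lb (B : Ud) u : g u - \sum_(x <- B) g (x |` u) <= Delta B g u.
Proof.
elim/fset1U_rect: B => [|x B xB IH]; first by rewrite big_seq_fset0 subr0 Delta0.
rewrite Delta_rec // big_fsetU1 //=.
have := Delta_le B (x |` u); lra.
Qed.

Definition mseq (u : Ud) : nat -> R^o := fun s => Delta (sq s `\` u) g u.

Lemma mseq_noninc u : nonincreasing_seq (mseq u).
Proof.
apply/nonincreasing_seqP => s; rewrite /mseq sqS.
case su: (s \in u).
  by rewrite (_ : (s |` sq s) `\` u = sq s `\` u) //; apply/fsetP => i; rewrite !inE;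
    case: (eqVneq i s) => [->|]; rewrite ?su.
rewrite (_ : (s |` sq s) `\` u = s |` (sq s `\` u)); last first.
  by apply/fsetP => i; rewrite !inE; case: (eqVneq i s) => [->|]; rewrite ?su.
by apply: Delta_mono1; rewrite !inE mem_sq ltnn andbF.
Qed.

Definition tt (u : Ud) : R := limn (mseq u).

Lemma mseq_cvg u : mseq u @ \oo --> (tt u : R^o).
Proof.
apply: (@nonincreasing_is_cvgn R (mseq u)); first exact: mseq_noninc.
by exists 0 => _ [s _ <-]; apply: Md_ge0.
Qed.

Lemma tt_le u s : tt u <= mseq u s.
Proof.
have h : cvgn (mseq u : R^nat) by exact: mseq_cvg.
exact: (@nonincreasing_cvgn_ge R (mseq u) (mseq_noninc u) h s).
Qed.

Lemma tt_ge0 u : 0 <= tt u.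
Proof.
have h : cvgn (mseq u : R^nat) by exact: mseq_cvg.
apply: (@limr_ge _ _ _ R _ (mseq u : R^nat) h).
by near=> s; apply: Md_ge0.
Unshelve. all: by end_near. Qed.
End MdTheory.

Local Open Scope ring_scope.
Local Open Scope classical_set_scope.
Local Open Scope fset_scope.

Definition EA (u A : Ud) : set Ud := [set v | (fsubset u v) && fdisjoint v A].

Section TupTheory.
Variable R : realType.
Variable C : R.
Hypothesis hC : 0 < C.
Variable h : Defs.family R.
Hypothesis hS : Sd C h.

Definition kw (v : Ud) : R := C ^+ (2 * Defs.card v) * h v.

Lemma kw0 v : 0 <= kw v.
Proof. by case: hS => /(_ v) h0 _; rewrite /kw mulr_ge0 // exprn_ge0 // ltW. Qed.

Lemma kwfin : (\esum_(v in [set: Ud]) (kw v)%:E < +oo)%E.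
Proof. by case: hS. Qed.

Lemma Tup_ES u : Tup C h u = ES kw [set v | u `<=` v].
Proof. by []. Qed.

Lemma Delta_Tup A u : Delta A (Tup C h) u = ES kw (EA u A).
Proof.
elim/fset1U_rect: A u => [|x A xA IH] u.
  rewrite Delta0 Tup_ES; congr ES; apply/seteqP; split => v /=.
    by rewrite /EA /= => ->; rewrite fdisjointX0.
  by rewrite /EA /= => /andP[].
rewrite Delta_rec // !IH (ES_split kw0 kwfin (EA (x |` u) A) (EA u A)).
have -> : (EA u A `&` EA (x |` u)%fset A)%classic = EA (x |` u) A.
  apply/seteqP; split => v /=; first by case.
  rewrite /EA /= fsubUset fsub1set => /andP[/andP[xv uv] dv].
  by rewrite xv uv dv.
have -> : (EA u A `&` ~` EA (x |` u)%fset A)%classic = EA u (x |` A).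
  apply/seteqP; split => v /=.
    rewrite /EA /= fsubUset fsub1set fdisjointXU fdisjointX1.
    case=> /andP[uv dv]; rewrite uv dv /= !andbT => xv.
    by apply/negP => xv'; apply: xv; rewrite xv'.
  rewrite /EA /= fsubUset fsub1set fdisjointXU fdisjointX1.
  case/andP => uv /andP[xv dv]; rewrite uv dv; split => //.
  by rewrite (negbTE xv).
lra.
Qed.
End TupTheory.

Lemma ex_new (u v : Ud) : u `<=` v -> v <> u -> exists2 i, i \in v & i \notin u.
Proof.
move=> uv vu; apply/fsubsetPn; apply/negP => vu'; apply: vu.
by apply/eqP; rewrite eqEfsubset vu' uv.
Qed.

Section TupTheory2.
Variable R : realType.
Variable C : R.
Hypothesis hC : 0 < C.
Variable h : Defs.family R.
Hypothesis hS : Sd C h.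
Let k0 := kw0 hC hS.
Let kf := kwfin hS.

Lemma Md_Tup : Md (Tup C h).
Proof.
split => [u|A u]; last by rewrite (Delta_Tup hC hS) ES_ge0.
by rewrite -Delta0 (Delta_Tup hC hS) ES_ge0.
Qed.

Lemma Tdown_Tup : Tdown C (Tup C h) = h.
Proof.
apply/funext => u; rewrite /Tdown.
have -> : limn ((fun s => Delta (sq s `\` u) (Tup C h) u) : nat -> R^o) = kw C h u.
  apply: limnE; under eq_fun do rewrite (Delta_Tup hC hS).
  rewrite -(ES_set1 k0).
  apply: (ES_cvg k0 kf) => s; split => v /=.
    rewrite /EA /= => -[/andP[uv dv] vu].
    have [i iv iu] := ex_new uv vu.
    have := fdisjointP dv i iv; rewrite !inE mem_sq iu /= -leqNgt => si.
    by rewrite /tail /=; apply: leq_trans (maxU_gt iv).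
  move=> [-> nP]; exfalso; apply: nP; rewrite /EA /= fsubset_refl /=.
  by apply/fdisjointP => i iu; rewrite !inE iu.
rewrite /kw mulrA mulVf ?mul1r //.
by rewrite expf_neq0 // gt_eqF.
Qed.
End TupTheory2.

Local Open Scope ring_scope.
Local Open Scope classical_set_scope.
Local Open Scope fset_scope.

Lemma set_eq_mob (u w : Ud) r s : u `<=` sq r -> w `<=` sq r `\` u -> (r <= s)%N ->
  ((sq r `\` u) `\` w) `|` (sq s `\` sq r) = sq s `\` (u `|` w).
Proof.
move=> /fsubsetP ur /fsubsetP wr rs; apply/fsetP => i; rewrite !inE !mem_sq.
case ir: (i < r)%N.
  rewrite (leq_trans ir rs) /=.
  by case: (i \in u); case: (i \in w).
have iu : i \notin u by apply/negP => /ur; rewrite mem_sq ir.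
have iw : i \notin w by apply/negP => /wr; rewrite !inE mem_sq ir andbF.
by rewrite (negbTE iu) (negbTE iw) !andbF.
Qed.

Section MdTheory2.
Variable R : realType.
Variable C : R.
Hypothesis hC : 0 < C.
Variable g : Defs.family R.
Hypothesis hg : Md g.

Lemma tt_sum_le u (F : {fset Ud}) : (forall v, v \in F -> u `<=` v) ->
  \sum_(v <- F) tt g v <= g u.
Proof.
move=> HF; set s := maxn (maxU u) (\max_(v <- F) maxU v).
have us : u `<=` sq s by rewrite -maxU_le leq_maxl.
have vs v : v \in F -> v `<=` sq s.
  by move=> vF; rewrite -maxU_le (leq_trans _ (leq_maxr _ _)) // (leq_bigmax_seq v).
apply: (@le_trans _ _ (\sum_(v <- F) Delta (((sq s `\` u) `\` (v `\` u)) `|` fset0) g (u `|` (v `\` u)))).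
  rewrite big_seq [X in _ <= X]big_seq; apply: ler_sum => v vF.
  rewrite fsetUDK' ?HF // fsetU0.
  have -> : (sq s `\` u) `\` (v `\` u) = sq s `\` v.
    apply/fsetP => i; rewrite !inE; have := fsubsetP (HF v vF) i.
    by case: (i \in u); case: (i \in v); case: (i \in sq s) => // /(_ isT).
  exact: tt_le.
rewrite -[X in _ <= X](Delta0 g u) -(mobius g u (fdisjointX0 (sq s `\` u))).
have H := @sum_reindex_le R u (sq s) (fun w => Delta ((sq s `\` u `\` w) `|` fset0) g (u `|` w)) F
  (fun w => Md_ge0 hg _ _) (fun v vF => conj (HF v vF) (vs v vF)).
exact: H.
Qed.

Lemma Tdown_kw v : kw C (Tdown C g) v = tt g v.
Proof.
rewrite /kw /Tdown mulrA mulfV ?mul1r //.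
by rewrite expf_neq0 // gt_eqF.
Qed.

Lemma Tdown_ge0 v : 0 <= Tdown C g v.
Proof.
rewrite /Tdown mulr_ge0 //; first by rewrite invr_ge0 exprn_ge0 // ltW.
exact: (tt_ge0 hg).
Qed.

Lemma Sd_Tdown : Sd C (Tdown C g).
Proof.
split; first exact: Tdown_ge0.
apply: (@le_lt_trans _ _ (g fset0)%:E); last exact: ltry.
apply: ge_ereal_sup => _ [X [finX _] <-].
rewrite fsbig_finite // sumEFin lee_fin.
under eq_bigr do rewrite -/(kw C (Tdown C g) _) Tdown_kw.
by apply: tt_sum_le => v _; exact: fsub0set.
Qed.

Let k0 := kw0 hC Sd_Tdown.
Let kf := kwfin Sd_Tdown.

Lemma Tup_Tdown_le u : Tup C (Tdown C g) u <= g u.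
Proof.
rewrite Tup_ES; apply: (ES_le k0 kf) => F HF.
under eq_bigr do rewrite Tdown_kw.
exact: tt_sum_le.
Qed.

Lemma inner_cvg u r : u `<=` sq r ->
  ((fun s => Delta (sq s `\` sq r) g u) : nat -> R^o) @ \oo -->
  (\sum_(w <- fpowerset (sq r `\` u)) tt g (u `|` w) : R^o).
Proof.
move=> ur.
apply: (@cvg_eqN _ (fun s => \sum_(w <- fpowerset (sq r `\` u)) mseq g (u `|` w) s) _ _ r).
  move=> s rs.
  have disj : [disjoint sq r `\` u & sq s `\` sq r].
    by apply/fdisjointP => i; rewrite !inE => /andP[_ ->].
  rewrite -(mobius g u disj) big_seq [RHS]big_seq; apply: eq_bigr => w.
  by rewrite fpowersetE => wA; rewrite /mseq set_eq_mob.
by apply: cvg_bigsum => w; exact: (mseq_cvg hg).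
Qed.

Lemma fsetUK' (u w : Ud) : [disjoint w & u] -> (u `|` w) `\` u = w.
Proof.
move=> /fdisjointP d; apply/fsetP => i; rewrite !inE.
case iw: (i \in w); last by case: (i \in u).
by rewrite (negbTE (d _ iw)) orbT.
Qed.

Lemma Lr_ES u r : u `<=` sq r ->
  \sum_(w <- fpowerset (sq r `\` u)) tt g (u `|` w) =
  ES (kw C (Tdown C g)) [set v | (u `<=` v) && (v `<=` sq r)].
Proof.
move=> ur; apply/eqP; rewrite eq_le; apply/andP; split.
  have dj w : w \in fpowerset (sq r `\` u) -> [disjoint w & u].
    rewrite fpowersetE => /fsubsetP wA; apply/fdisjointP => i /wA.
    by rewrite !inE => /andP[].
  have -> : \sum_(w <- fpowerset (sq r `\` u)) tt g (u `|` w) =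
            \sum_(v <- [fset u `|` w | w in fpowerset (sq r `\` u)]) tt g v.
    rewrite [RHS]big_imfset //= => w1 w2 /dj d1 /dj d2 e.
    by rewrite -(fsetUK' d1) -(fsetUK' d2) e.
  under eq_bigr do rewrite -Tdown_kw.
  apply: (ES_fin k0 kf) => v /imfsetP [w wA ->] /=.
  rewrite fsubsetUl /= fsubUset ur /=.
  by move: wA; rewrite fpowersetE => /fsubset_trans; apply; rewrite fsubDset fsubsetUr.
apply: (ES_le k0 kf) => F HF.
under eq_bigr do rewrite Tdown_kw.
have -> : \sum_(v <- F) tt g v = \sum_(v <- F) tt g (u `|` (v `\` u)).
  rewrite big_seq [RHS]big_seq; apply: eq_bigr => v vF.
  by have /andP[uv _] := HF v vF; rewrite fsetUDK'.
have H := @sum_reindex_le R u (sq r) (fun w => tt g (u `|` w)) F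
  (fun w => tt_ge0 hg _) (fun v vF => let: conj a b := andP (HF v vF) in conj a b).
exact: H.
Qed.

Lemma LL_cvg u :
  ((fun r => limn ((fun s => Delta (sq s `\` sq r) g u) : nat -> R^o)) : nat -> R^o)
    @ \oo --> (Tup C (Tdown C g) u : R^o).
Proof.
apply: (@cvg_eqN _ (fun r => ES (kw C (Tdown C g)) [set v | (u `<=` v) && (v `<=` sq r)]) _ _ (maxU u)).
  move=> r ur; have us : u `<=` sq r by rewrite -maxU_le.
  by rewrite (limnE (inner_cvg us)) Lr_ES.
rewrite Tup_ES; apply: (ES_cvg k0 kf) => r; split => v /=.
  by case=> /andP[uv _] []; exact: uv.
case=> uv nP; rewrite /tail /= ltnNge maxU_le; apply/negP => vr.
by apply: nP; rewrite uv vr.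
Qed.

Lemma Ad_iff : Ad g <-> Tup C (Tdown C g) = g.
Proof.
split => [[_ H]|e]; first by apply/funext => u; exact: (cvg_uniq (LL_cvg (u:=u)) (H u)).
split => // u; have := LL_cvg (u:=u); by rewrite e.
Qed.
End MdTheory2.

Local Open Scope ring_scope.
Local Open Scope classical_set_scope.
Local Open Scope fset_scope.

Section Prod.
Variable R : realType.
Variable p : nat -> R.
Hypothesis p01 : forall i, 0 <= p i <= 1.

Definition gp : Defs.family R := fun u => \prod_(i <- u) p i.

Lemma gp_U1 x u : x \notin u -> gp (x |` u) = p x * gp u.
Proof. by move=> xu; rewrite /gp big_fsetU1. Qed.

Lemma Delta_gp A u : [disjoint A & u] ->
  Delta A gp u = gp u * \prod_(i <- A) (1 - p i).
Proof.
elim/fset1U_rect: A u => [|x A xA IH] u.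
  by move=> _; rewrite Delta0 big_seq_fset0 mulr1.
rewrite fdisjointU1X => /andP[xu dA].
have dA' : [disjoint A & x |` u].
  by rewrite fdisjointXU fdisjointX1 xA dA.
rewrite Delta_rec // IH // IH // gp_U1 // big_fsetU1 //=.
ring.
Qed.

Lemma gp_ge0 u : 0 <= gp u.
Proof. by apply: prodr_ge0 => i _; case/andP: (p01 i). Qed.

Lemma gp_le1 u : gp u <= 1.
Proof. by apply: prodr_ile1 => i _; exact: p01. Qed.

Lemma Md_gp : Md gp.
Proof.
split => [u|A u]; first exact: gp_ge0.
case: (boolP (fdisjoint A u)) => [d|nd].
  rewrite Delta_gp // mulr_ge0 ?gp_ge0 // prodr_ge0 // => i _.
  by case/andP: (p01 i) => _ ?; rewrite subr_ge0.
have [x] : exists x, x \in A `&` u.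
  move: nd; rewrite /fdisjoint => /fset0Pn [x xAu]; by exists x.
by rewrite inE => /andP[xA xu]; rewrite (Delta_meet _ xA xu).
Qed.
End Prod.

Lemma maxU_ex u n : (n < maxU u)%N -> exists2 i, i \in u & (n <= i)%N.
Proof.
move=> h; case: (boolP (has (fun i => n <= i)%N u)) => [/hasP[i iu ni]|/hasPn H].
  by exists i.
suff : (maxU u <= n)%N by rewrite leqNgt h.
apply/bigmax_leqP_seq => i iu _; have := H i iu; by rewrite -ltnNge.
Qed.

Lemma maxU1 N : maxU [fset N] = N.+1.
Proof. by rewrite /maxU big_seq_fset1. Qed.

Section Examples.
Variable R : realType.

Lemma gp1 : gp (fun _ => 1 : R) = (fun _ => 1).
Proof. by apply/funext => u; rewrite /gp big1. Qed.

Lemma Md_one : Md (fun _ : Ud => 1 : R).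
Proof.
rewrite -gp1; apply: Md_gp => i; by rewrite ler01 lexx.
Qed.

Lemma not_Nd_one : ~ Nd (fun _ : Ud => 1 : R).
Proof.
move=> [_ H]; have [N HN] := H 1 ltr01.
by have := HN [fset N]; rewrite maxU1 => /(_ (leqnSn N)); rewrite ltxx.
Qed.

Definition ph (i : nat) : R := (i.+2)%:R^-1.

Lemma ph01 i : 0 <= ph i <= 1.
Proof. by rewrite /ph invr_ge0 ler0n /= invf_le1 ?ltr0n // ler1n. Qed.

Lemma Nd_ph : Nd (gp ph).
Proof.
split; first exact: (Md_gp ph01).
move=> eps e0; set M := Num.bound (eps^-1).
have HM : eps^-1 < M%:R by apply: archi_boundP; rewrite invr_ge0 ltW.
exists M.+1 => u Mu; have [i iu Mi] := maxU_ex Mu.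
rewrite /gp (big_fsetD1 i iu) /=.
apply: (@le_lt_trans _ _ (ph i)).
  have h1 := gp_le1 ph01 (u `\ i); have h0 := gp_ge0 ph01 (u `\ i).
  have := ph01 i; rewrite /gp in h1 h0; nra.
rewrite /ph -[eps]invrK ltf_pV2 ?posrE ?ltr0n ?invr_gt0 //.
apply: lt_le_trans HM _; rewrite ler_nat.
exact: (leq_trans Mi (leq_trans (leqnSn i) (leqnSn i.+1))).
Qed.
End Examples.

Section Examples2.
Variable R : realType.

Lemma prod_sq r s : (r <= s)%N ->
  \prod_(i <- sq s `\` sq r) (1 - ph R i) = (r.+1)%:R / (s.+1)%:R.
Proof.
elim: s => [|s IH] rs.
  by move: rs; rewrite leqn0 => /eqP ->; rewrite fsetDv big_seq_fset0 divff // pnatr_eq0.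
move: rs; rewrite leq_eqVlt => /orP [/eqP ->|rs].
  by rewrite fsetDv big_seq_fset0 divff // pnatr_eq0.
have -> : sq s.+1 `\` sq r = s |` (sq s `\` sq r).
  apply/fsetP => i; rewrite sqS !inE !mem_sq.
  case: (eqVneq i s) => [->|] //=; by rewrite ltnNge -ltnS rs.
rewrite big_fsetU1 /=; last by rewrite !inE !mem_sq ltnn andbF.
rewrite (_ : \prod_(i <- sq s `\` sq r) (1 - ph R i) = r.+1%:R / s.+1%:R); last exact: IH.
rewrite /ph.
have h1 : (s.+1)%:R != 0 :> R by rewrite pnatr_eq0.
have h2 : (s.+2)%:R != 0 :> R by rewrite pnatr_eq0.
rewrite -[(s.+2)%:R]natr1 -[(s.+1)%:R]natr1 in h2 *.
rewrite -[(s.+1)%:R]natr1 in h1.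
field.
by rewrite h1 h2.
Qed.

Lemma cvg_ratio r : ((fun s => (r.+1)%:R / (s.+1)%:R : R) : nat -> R^o) @ \oo --> (0 : R^o).
Proof.
apply: cvg_epsN => e e0.
set M := Num.bound ((r.+1)%:R / e).
have HM : (r.+1)%:R / e < M%:R by apply: archi_boundP; rewrite divr_ge0 // ltW.
exists M => s Ms; rewrite sub0r normrN ger0_norm ?divr_ge0 //.
rewrite ler_pdivrMr ?ltr0n //.
have : (r.+1)%:R / e < (s.+1)%:R.
  by apply: lt_le_trans HM _; rewrite ler_nat (leq_trans Ms).
by rewrite ltr_pdivrMr // => /ltW; rewrite mulrC.
Qed.

Lemma not_Ad_ph : ~ Ad (gp (ph R)).
Proof.
move=> [_ H]; have Hf := H fset0.
have Hc : ((fun r => limn ((fun s => Delta (sq s `\` sq r) (gp (ph R)) fset0) : nat -> R^o)) : nat -> R^o)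
    @ \oo --> (0 : R^o).
  apply: (@cvg_eqN _ (fun _ => 0) _ _ 0); last exact: cvg_cst.
  move=> r _; apply/esym/limnE.
  apply: (@cvg_eqN _ (fun s => (r.+1)%:R / (s.+1)%:R : R) _ _ r); last exact: cvg_ratio.
  move=> s rs; rewrite Delta_gp ?fdisjointX0 // prod_sq //.
  by rewrite /gp big_seq_fset0 mul1r.
have := cvg_uniq Hc Hf; rewrite /gp big_seq_fset0 => /eqP; by rewrite eq_sym oner_eq0.
Qed.
End Examples2.

Local Open Scope ring_scope.
Local Open Scope classical_set_scope.
Local Open Scope fset_scope.

Lemma card_sq n : Defs.card (sq n) = n.
Proof.
elim: n => [|n IH].
  by rewrite (_ : sq 0 = fset0) ?card0 //; apply/fsetP => i; rewrite mem_sq inE.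
by rewrite sqS cardU1 ?IH // mem_sq ltnn.
Qed.

Lemma sumr_cst (R : realType) (T : Type) (s : seq T) (c : R) :
  \sum_(i <- s) c = (size s)%:R * c.
Proof.
elim: s => [|a s IH]; first by rewrite big_nil mul0r.
by rewrite big_cons IH /= -natr1 mulrDl mul1r addrC.
Qed.

Section Chain.
Variable R : realType.
Variable C : R.
Hypothesis hC : 0 < C.

Definition x2 : R := 2^-1.
Definition fc (n : nat) : R := n%:R * x2 ^+ n.
Definition kc (v : Ud) : R := if v == sq (Defs.card v) then fc (Defs.card v) else 0.
Definition hc (v : Ud) : R := C ^- (2 * Defs.card v) * kc v.

Lemma x2_ge0 : 0 <= x2. Proof. by rewrite /x2 invr_ge0 ler0n. Qed.

Lemma fc0 n : 0 <= fc n. Proof. by rewrite /fc mulr_ge0 // exprn_ge0 // x2_ge0. Qed.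

Lemma kc0 v : 0 <= kc v. Proof. by rewrite /kc; case: ifP => _ //; exact: fc0. Qed.

Lemma fc_sum N : \sum_(n < N) fc n = 2 - 2 * (N.+1)%:R * x2 ^+ N.
Proof.
elim: N => [|N IH]; first by rewrite big_ord0 expr0 mulr1; ring.
rewrite big_ord_recr /= IH /fc exprS.
have h : 2 * x2 = 1 by rewrite /x2 mulfV // pnatr_eq0.
rewrite -!natr1.
set y := x2 ^+ N.
transitivity (2 - (N%:R + 2) * ((2 * x2) * y)); first by rewrite h mul1r; ring.
ring.
Qed.

Lemma fc_sum_le N : \sum_(n < N) fc n <= 2.
Proof.
rewrite fc_sum gerBl mulr_ge0 // ?exprn_ge0 ?x2_ge0 //.
Qed.

Lemma kc_sum_le (F : {fset Ud}) : \sum_(v <- F) kc v <= 2.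
Proof.
set N := (\max_(v <- F) Defs.card v).+1.
apply: (@le_trans _ _ (\sum_(v <- F) \sum_(n < N) (if v == sq n then fc n else 0))).
  rewrite big_seq [X in _ <= X]big_seq; apply: ler_sum => v vF.
  rewrite /kc; case: ifP => e; last first.
    by apply: sumr_ge0 => n _; case: ifP => _ //; exact: fc0.
  have lt : (Defs.card v < N)%N by rewrite ltnS (leq_bigmax_seq v).
  rewrite (bigD1 (Ordinal lt)) //= e lerDl.
  by apply: sumr_ge0 => n _; case: ifP => _ //; exact: fc0.
rewrite exchange_big /=; apply: le_trans (fc_sum_le N); apply: ler_sum => n _.
rewrite -big_mkcond /= big_fset_condE.
apply: (@le_trans _ _ (\sum_(v <- [fset sq n]) fc n)); last by rewrite big_seq_fset1.
apply: sum_fsub_le; last by move=> *; exact: fc0.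
by apply/fsubsetP => v; rewrite !inE => /andP[_ ->].
Qed.
End Chain.

Section Chain2.
Variable R : realType.
Variable C : R.
Hypothesis hC : 0 < C.

Lemma kw_hc v : kw C (hc C) v = kc R v.
Proof. by rewrite /kw /hc mulrA mulfV ?mul1r // expf_neq0 // gt_eqF. Qed.

Lemma Sd_hc : Sd C (hc C).
Proof.
split.
  by move=> v; rewrite /hc mulr_ge0 ?kc0 // invr_ge0 exprn_ge0 // ltW.
apply: (@le_lt_trans _ _ (2:R)%:E); last exact: ltry.
apply: ge_ereal_sup => _ [X [finX _] <-].
rewrite fsbig_finite // sumEFin lee_fin.
under eq_bigr do rewrite -/(kw C (hc C) _) kw_hc.
exact: kc_sum_le.
Qed.

Lemma not_Pd_chain : ~ Pd (Tup C (hc C)).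
Proof.
move=> [hg hfin].
have g0 := Md_g0 hg.
set T := ES (Tup C (hc C)) [set: Ud].
have key n : n%:R <= T.
  apply: (@le_trans _ _ (\sum_(u <- fpowerset (sq n)) Tup C (hc C) u)); last first.
    by apply: (ES_fin g0 hfin).
  apply: (@le_trans _ _ (\sum_(u <- fpowerset (sq n)) fc R n)).
    have cs := card_sq n; rewrite /Defs.card in cs.
    by rewrite sumr_cst card_fpowerset cs /fc /x2 natrX mulrCA -exprMn mulfV ?pnatr_eq0 // expr1n mulr1.
  rewrite big_seq [X in _ <= X]big_seq; apply: ler_sum => u.
  rewrite fpowersetE => un; rewrite Tup_ES.
  apply: (@le_trans _ _ (\sum_(v <- [fset sq n]) kw C (hc C) v)).
    by rewrite big_seq_fset1 kw_hc /kc card_sq eqxx.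
  apply: (ES_fin (kw0 hC Sd_hc) (kwfin Sd_hc)) => v; rewrite inE => /eqP -> /=.
  exact: un.
have T0 : 0 <= T by apply: ES_ge0.
have := archi_boundP T0; have := key (Num.bound T); lra.
Qed.
End Chain2.

Local Open Scope ring_scope.
Local Open Scope classical_set_scope.
Local Open Scope fset_scope.

Section Incl.
Variable R : realType.
Variable C : R.
Hypothesis hC : 0 < C.

Lemma Pd_Ad (g : Defs.family R) : Pd g -> Ad g.
Proof.
move=> [hg hfin]; split => // u.
have g0 := Md_g0 hg.
apply: cvg_epsN => e e0.
have [N HN] := tail_small g0 hfin e0.
exists (maxn N (maxU u)) => r hr /=.
have Nr : (N <= r)%N by apply: leq_trans hr; exact: leq_maxl.
have ur : u `<=` sq r by rewrite -maxU_le; apply: leq_trans hr; exact: leq_maxr.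
have cf : cvgn ((fun s => Delta (sq s `\` sq r) g u) : nat -> R^o).
  exact: cvgP (inner_cvg hg ur).
have up : limn ((fun s => Delta (sq s `\` sq r) g u) : nat -> R^o) <= g u.
  apply: (limr_le cf); near=> s; exact: Delta_le hg _ _.
have lo : g u - ES g (tail r) <= limn ((fun s => Delta (sq s `\` sq r) g u) : nat -> R^o).
  apply: (limr_ge cf); near=> s.
  apply: le_trans (Delta_lb hg _ _); rewrite lerB //.
  have xu x : x \in sq s `\` sq r -> x \notin u.
    rewrite !inE mem_sq => /andP[xr _]; apply/negP => /(fsubsetP ur).
    by rewrite mem_sq (negbTE xr).
  have -> : \sum_(x <- sq s `\` sq r) g (x |` u) =
            \sum_(v <- [fset x |` u | x in sq s `\` sq r]) g v.
    rewrite [RHS]big_imfset //= => x y /xu xu' /xu yu' exy.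
    have : x \in y |` u by rewrite -exy fset1U1.
    by rewrite !inE (negbTE xu') orbF => /eqP.
  apply: (ES_fin g0 hfin) => v /imfsetP [x xB ->] /=.
  have xr : (r <= x)%N by move: xB; rewrite !inE mem_sq -leqNgt => /andP[].
  by rewrite /tail /=; apply: leq_trans (maxU_gt (fset1U1 x u)).
have := HN r Nr; rewrite ler_norml => hT; apply/andP; split; lra.
Unshelve. all: by end_near. Qed.

Lemma Ad_Nd (g : Defs.family R) : Ad g -> Nd g.
Proof.
move=> hA; have hg := hA.1; split => // eps e0.
have e1 := (Ad_iff hC hg).1 hA.
have e2 : 0 < eps / 2 by rewrite divr_gt0.
have [N HN] := tail_small (kw0 hC (Sd_Tdown hC hg)) (kwfin (Sd_Tdown hC hg)) e2.
exists N.+1 => u Nu; rewrite -e1 Tup_ES.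
apply: (@le_lt_trans _ _ (eps / 2)); last by lra.
apply: le_trans (HN N (leqnn N)).
apply: (ES_sub (kw0 hC (Sd_Tdown hC hg)) (kwfin (Sd_Tdown hC hg))) => v /= uv.
by rewrite /tail /=; apply: leq_trans (maxU_sub uv).
Qed.
End Incl.

Local Open Scope ring_scope.
Local Open Scope classical_set_scope.
Unset Implicit Arguments.
Local Open Scope ring_scope.
Local Open Scope classical_set_scope.

Theorem mainTheorem2 (R : realType) (C : R) (hC : 0 < C) :
  [/\ (@Pd R) `<` (@Ad R),
      (@Ad R) = Tup C @` Sd C,
      (@Ad R) `<` (@Nd R) &
      (@Nd R) `<` (@Md R)] /\
  [/\ (forall g, Sd C g -> (@Ad R) (Tup C g)),
      (forall g, Sd C g -> Tdown C (Tup C g) = g),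
      (forall g, (@Ad R) g -> Sd C (Tdown C g) /\ Tup C (Tdown C g) = g),
      Tdown C @` (@Md R) = Sd C &
      (forall g, (@Md R) g ->
         (forall u, Tup C (Tdown C g) u <= g u) /\
         (Tup C (Tdown C g) = g <-> (@Ad R) g))].
Proof.
have i1 : forall g, Sd C g -> Ad (Tup C g).
  move=> g hS; apply/(Ad_iff hC (Md_Tup hC hS)).
  by rewrite (Tdown_Tup hC hS).
split; split.
- split; first by move=> g; exact: Pd_Ad.
  move=> H; apply: (not_Pd_chain hC); apply: H; apply: i1; exact: Sd_hc.
- apply/seteqP; split => g.
    move=> hA; exists (Tdown C g); first exact: (Sd_Tdown hC hA.1).
    exact: (Ad_iff hC hA.1).1 hA.
  by move=> [h hS <-]; exact: i1.
- split; first by move=> g; exact: (Ad_Nd hC).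
  move=> H; apply: (@not_Ad_ph R); apply: H; exact: Nd_ph.
- split; first by move=> g [].
  move=> H; apply: (@not_Nd_one R); apply: H; exact: Md_one.
- exact: i1.
- by move=> g hS; exact: (Tdown_Tup hC hS).
- move=> g hA; split; first exact: (Sd_Tdown hC hA.1).
  exact: (Ad_iff hC hA.1).1 hA.
- apply/seteqP; split => h.
    by move=> [g hg <-]; exact: (Sd_Tdown hC hg).
  move=> hS; exists (Tup C h); first exact: (Md_Tup hC hS).
  exact: (Tdown_Tup hC hS).
- move=> g hg; split; first exact: (Tup_Tdown_le hC hg).
  by split => H; apply/(Ad_iff hC hg).
Qed.
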